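(* For terms $L,M$ of the CCV $\lambda\mu$-calculus, if $L=_{ccv}M$ then $[\![L]\!]=[\![M]\!]$ with respect to $\beta\eta$-equality of the $\lambda$-calculus.
   Context: CCV $\lambda\mu$-calculus. Ordinary variables $x,y,z,\dots$ and continuation variables $k,l,\dots$ are disjoint. Terms $M ::= x \mid \lambda x.M \mid MM \mid (M\ \mathsf{where}\ x:=M) \mid \mu k.J$, jumps $J ::= [k]M \mid (J\ \mathsf{where}\ x:=M)$, where $(L\ \mathsf{where}\ x:=M)$ means $\mathsf{let}\ x=M\ \mathsf{in}\ L$ ($x$ bound in $L$ only). Terms are identified up to $\alpha$-conversion and the congruence generated by (E1) $(L\ \mathsf{where}\ x:=(M\ \mathsf{where}\ y:=N))=((L\ \mathsf{where}\ x:=M)\ \mathsf{where}\ y:=N)$ if $y$ not free in $L$; (E2) $((\mu k.J)\ \mathsf{where}\ x:=M)=\mu k.(J\ \mathsf{where}\ x:=M)$ if $k$ not free in $M$; (E3) $[k](L\ \mathsf{where}\ x:=M)=([k]L\ \mathsf{where}\ x:=M)$. Values $V$: variables and $\lambda$-abstractions; $N$ a non-value. $=_{ccv}$ is the smallest congruence containing ($z$ fresh): $NM\to(zM\ \mathsf{where}\ z:=N)$; $VN\to(Vz\ \mathsf{where}\ z:=N)$; $(\lambda x.M)V\to(M\ \mathsf{where}\ x:=V)$; $(M\ \mathsf{where}\ x:=V)\to M\{V/x\}$; $(M\ \mathsf{where}\ x:=\mu k.J)\to\mu k.J\{[k]\square\mapsto[k](M\ \mathsf{where}\ x:=\square)\}$;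 $[l]\mu k.J\to J\{l/k\}$; $\lambda x.Vx\to V$ ($x$ not free in $V$); $(x\ \mathsf{where}\ x:=M)\to M$; $\mu k.[k]M\to M$ ($k$ not free in $M$); the context substitution replaces recursively each subjump $[k]Q$ with $k$ free by $[k](M\ \mathsf{where}\ x:=Q)$, and $J\{l/k\}$ replaces each such $[k]Q$ by $[l]Q$. CPS translation into the $\lambda$-calculus (fresh bound variables, $K$ a $\lambda$-term): $\langle V\rangle[K]=KV^*$; $\langle V_1V_2\rangle[K]=V_1^*V_2^*K$; $\langle VN\rangle[K]=\langle N\rangle[\lambda y.V^*yK]$; $\langle NV\rangle[K]=\langle N\rangle[\lambda x.xV^*K]$; $\langle N_1N_2\rangle[K]=\langle N_1\rangle[\lambda x.\langle N_2\rangle[\lambda y.xyK]]$; $\langle (L\ \mathsf{where}\ x:=M)\rangle[K]=\langle M\rangle[\lambda x.\langle L\rangle[K]]$ (renaming $x$ if free in $K$); $\langle\mu k.J\rangle[K]=(\lambda k.\langle J\rangle)K$; $\langle[k]M\rangle=\langle M\rangle[k]$; $\langle (J\ \mathsf{where}\ x:=M)\rangle=\langle M\rangle[\lambda x.\langle J\rangle]$; $x^*=x$; $(\lambda x.M)^*=\lambda xk.\langle M\rangle[k]$; $[\![M]\!]=\lambda k.\langle M\rangle[k]$, computed from any syntax-tree representative. *)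

(* Defs.v *)
From Stdlib Require Import Arith.

(** Ordinary variables and continuation variables live in two SEPARATE de Bruijn
    index spaces.  [Lam M] and the body [L] of [Where L M] bind ordinary index 0;
    [Mu J] binds continuation index 0.  [Where L M] is (L where x := M). *)
Inductive term : Type :=
| Var : nat -> term
| Lam : term -> term
| App : term -> term -> term
| Where : term -> term -> term
| Mu : jump -> term
with jump : Type :=
| Jmp : nat -> term -> jump           (* [k] M *)
| JWhere : jump -> term -> jump.      (* (J where x := M), x bound in J only *)

Definition is_value (M : term) : bool :=
  match M with Var _ | Lam _ => true | _ => false end.

Fixpoint liftO (c : nat) (M : term) : term :=
  match M with
  | Var n => if c <=? n then Var (S n) else Var n
  | Lam M => Lam (liftO (S c) M)
  | App M N => App (liftO c M) (liftO c N)
  | Where L N => Where (liftO (S c) L) (liftO c N)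
  | Mu J => Mu (liftOJ c J)
  end
with liftOJ (c : nat) (J : jump) : jump :=
  match J with
  | Jmp k M => Jmp k (liftO c M)
  | JWhere J N => JWhere (liftOJ (S c) J) (liftO c N)
  end.

Fixpoint liftC (c : nat) (M : term) : term :=
  match M with
  | Var n => Var n
  | Lam M => Lam (liftC c M)
  | App M N => App (liftC c M) (liftC c N)
  | Where L N => Where (liftC c L) (liftC c N)
  | Mu J => Mu (liftCJ (S c) J)
  end
with liftCJ (c : nat) (J : jump) : jump :=
  match J with
  | Jmp k M => Jmp (if c <=? k then S k else k) (liftC c M)
  | JWhere J N => JWhere (liftCJ c J) (liftC c N)
  end.

(** M{V/x}: substitute V for ordinary index d (V already in the current context),
    decrementing ordinary indices above d *)
Fixpoint substO (d : nat) (V : term) (M : term) : term :=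
  match M with
  | Var n => if n =? d then V else if d <? n then Var (pred n) else Var n
  | Lam M => Lam (substO (S d) (liftO 0 V) M)
  | App M N => App (substO d V M) (substO d V N)
  | Where L N => Where (substO (S d) (liftO 0 V) L) (substO d V N)
  | Mu J => Mu (substOJ d (liftC 0 V) J)
  end
with substOJ (d : nat) (V : term) (J : jump) : jump :=
  match J with
  | Jmp k M => Jmp k (substO d V M)
  | JWhere J N => JWhere (substOJ (S d) (liftO 0 V) J) (substO d V N)
  end.

Fixpoint substC (d l : nat) (M : term) : term :=
  match M with
  | Var n => Var n
  | Lam M => Lam (substC d l M)
  | App M N => App (substC d l M) (substC d l N)
  | Where L N => Where (substC d l L) (substC d l N)
  | Mu J => Mu (substCJ (S d) (S l) J)
  end
with substCJ (d l : nat) (J : jump) : jump :=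
  match J with
  | Jmp k M =>
      Jmp (if k =? d then l else if d <? k then pred k else k) (substC d l M)
  | JWhere J N => JWhere (substCJ d l J) (substC d l N)
  end.

(** Context substitution J{[k]Q |-> [k](M where x := Q)} with k = continuation
    index dk.  [M] is the body of the where (its ordinary index 0 is x), already
    placed in the current context. *)
Fixpoint csub (dk : nat) (M : term) (P : term) : term :=
  match P with
  | Var n => Var n
  | Lam P => Lam (csub dk (liftO 1 M) P)
  | App P Q => App (csub dk M P) (csub dk M Q)
  | Where L Q => Where (csub dk (liftO 1 M) L) (csub dk M Q)
  | Mu J => Mu (csubJ (S dk) (liftC 0 M) J)
  end
with csubJ (dk : nat) (M : term) (J : jump) : jump :=
  match J with
  | Jmp k Q =>
      if k =? dk then Jmp k (Where M (csub dk M Q)) else Jmp k (csub dk M Q)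
  | JWhere J Q => JWhere (csubJ dk (liftO 1 M) J) (csub dk M Q)
  end.

(** =_ccv : smallest congruence containing the rules, on syntax trees; the
    identifications alpha (built into de Bruijn) and (E1)-(E3) are included as
    generating equations. *)
Inductive ccv_eq : term -> term -> Prop :=
| ccv_nm : forall N M, is_value N = false ->
    ccv_eq (App N M) (Where (App (Var 0) (liftO 0 M)) N)
| ccv_vn : forall V N, is_value V = true -> is_value N = false ->
    ccv_eq (App V N) (Where (App (liftO 0 V) (Var 0)) N)
| ccv_beta : forall M V, is_value V = true ->
    ccv_eq (App (Lam M) V) (Where M V)
| ccv_let : forall M V, is_value V = true ->
    ccv_eq (Where M V) (substO 0 V M)
| ccv_letmu : forall M J,
    ccv_eq (Where M (Mu J)) (Mu (csubJ 0 (liftC 0 M) J))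
| ccv_eta : forall V, is_value V = true ->
    ccv_eq (Lam (App (liftO 0 V) (Var 0))) V
| ccv_letid : forall M, ccv_eq (Where (Var 0) M) M
| ccv_mueta : forall M, ccv_eq (Mu (Jmp 0 (liftC 0 M))) M
| ccv_E1 : forall L M N,
    ccv_eq (Where L (Where M N)) (Where (Where (liftO 1 L) M) N)
| ccv_E2 : forall J M,
    ccv_eq (Where (Mu J) M) (Mu (JWhere J (liftC 0 M)))
| ccv_refl : forall M, ccv_eq M M
| ccv_sym : forall M N, ccv_eq M N -> ccv_eq N M
| ccv_trans : forall M N P, ccv_eq M N -> ccv_eq N P -> ccv_eq M P
| ccv_Lam : forall M M', ccv_eq M M' -> ccv_eq (Lam M) (Lam M')
| ccv_App : forall M M' N N', ccv_eq M M' -> ccv_eq N N' ->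
    ccv_eq (App M N) (App M' N')
| ccv_Where : forall L L' M M', ccv_eq L L' -> ccv_eq M M' ->
    ccv_eq (Where L M) (Where L' M')
| ccv_Mu : forall J J', ccv_eqJ J J' -> ccv_eq (Mu J) (Mu J')
with ccv_eqJ : jump -> jump -> Prop :=
| ccvJ_mu : forall l J, ccv_eqJ (Jmp l (Mu J)) (substCJ 0 l J)
| ccvJ_E1 : forall L M N,
    ccv_eqJ (JWhere L (Where M N)) (JWhere (JWhere (liftOJ 1 L) M) N)
| ccvJ_E3 : forall k L M, ccv_eqJ (Jmp k (Where L M)) (JWhere (Jmp k L) M)
| ccvJ_refl : forall J, ccv_eqJ J J
| ccvJ_sym : forall J J', ccv_eqJ J J' -> ccv_eqJ J' J
| ccvJ_trans : forall J1 J2 J3, ccv_eqJ J1 J2 -> ccv_eqJ J2 J3 -> ccv_eqJ J1 J3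
| ccvJ_Jmp : forall k M M', ccv_eq M M' -> ccv_eqJ (Jmp k M) (Jmp k M')
| ccvJ_JWhere : forall J J' M M', ccv_eqJ J J' -> ccv_eq M M' ->
    ccv_eqJ (JWhere J M) (JWhere J' M').

Inductive lterm : Type :=
| tVar : nat -> lterm
| tLam : lterm -> lterm
| tApp : lterm -> lterm -> lterm.

Fixpoint tlift (c : nat) (t : lterm) : lterm :=
  match t with
  | tVar n => if c <=? n then tVar (S n) else tVar n
  | tLam t => tLam (tlift (S c) t)
  | tApp t u => tApp (tlift c t) (tlift c u)
  end.

Fixpoint tsubst (d : nat) (u : lterm) (t : lterm) : lterm :=
  match t with
  | tVar n => if n =? d then u else if d <? n then tVar (pred n) else tVar n
  | tLam t => tLam (tsubst (S d) (tlift 0 u) t)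
  | tApp t1 t2 => tApp (tsubst d u t1) (tsubst d u t2)
  end.

Inductive beta_eta : lterm -> lterm -> Prop :=
| be_beta : forall t u, beta_eta (tApp (tLam t) u) (tsubst 0 u t)
| be_eta : forall t, beta_eta (tLam (tApp (tlift 0 t) (tVar 0))) t
| be_refl : forall t, beta_eta t t
| be_sym : forall t u, beta_eta t u -> beta_eta u t
| be_trans : forall t u v, beta_eta t u -> beta_eta u v -> beta_eta t v
| be_Lam : forall t t', beta_eta t t' -> beta_eta (tLam t) (tLam t')
| be_App : forall t t' u u', beta_eta t t' -> beta_eta u u' ->
    beta_eta (tApp t u) (tApp t' u').

(** * CPS translation.
    [cps M s k K] = <M>[K], where [s] (resp. [k]) maps the ordinary (resp.
    continuation) de Bruijn indices of M to target indices; [star] = V^*. *)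
Definition shiftmap (s : nat -> nat) : nat -> nat := fun n => S (s n).
Definition consmap (s : nat -> nat) : nat -> nat :=
  fun n => match n with 0 => 0 | S m => S (s m) end.

Fixpoint star (V : term) (s k : nat -> nat) {struct V} : lterm :=
  match V with
  | Var x => tVar (s x)
  | Lam M =>  (* lambda x k'. <M>[k'] *)
      tLam (tLam (cps M (fun n => match n with 0 => 1 | S m => S (S (s m)) end)
                        (fun n => S (S (k n))) (tVar 0)))
  | _ => tVar 0 (* not used: star is only applied to values *)
  end
with cps (M : term) (s k : nat -> nat) (K : lterm) {struct M} : lterm :=
  match M with
  | Var x => tApp K (tVar (s x))
  | Lam B => tApp K (tLam (tLam (cps B (fun n => match n with 0 => 1 | S m => S (S (s m)) end)
                        (fun n => S (S (k n))) (tVar 0))))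
  | App M1 M2 =>
      match is_value M1, is_value M2 with
      | true, true => tApp (tApp (star M1 s k) (star M2 s k)) K
      | true, false =>  (* <N>[lambda y. V^* y K] *)
          cps M2 s k (tLam (tApp (tApp (tlift 0 (star M1 s k)) (tVar 0)) (tlift 0 K)))
      | false, true =>  (* <N>[lambda x. x V^* K] *)
          cps M1 s k (tLam (tApp (tApp (tVar 0) (tlift 0 (star M2 s k))) (tlift 0 K)))
      | false, false => (* <N1>[lambda x. <N2>[lambda y. x y K]] *)
          cps M1 s k (tLam (cps M2 (shiftmap s) (shiftmap k)
                      (tLam (tApp (tApp (tVar 1) (tVar 0)) (tlift 0 (tlift 0 K))))))
      end
  | Where L N => (* <N>[lambda x. <L>[K]] *)
      cps N s k (tLam (cps L (consmap s) (shiftmap k) (tlift 0 K)))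
  | Mu J => (* (lambda k. <J>) K *)
      tApp (tLam (cpsJ J (shiftmap s) (consmap k))) K
  end
with cpsJ (J : jump) (s k : nat -> nat) {struct J} : lterm :=
  match J with
  | Jmp c M => cps M s k (tVar (k c))
  | JWhere J N => cps N s k (tLam (cpsJ J (consmap s) (shiftmap k)))
  end.

(** [[M]] = lambda k. <M>[k]; free ordinary variable x is sent to target
    variable 2x and free continuation variable k to 2k+1 (disjoint naming). *)
Definition cps_top (M : term) : lterm :=
  tLam (cps M (fun x => S (2 * x)) (fun c => S (2 * c + 1)) (tVar 0)).

(* Main.v *)
Require Import Defs.
From Stdlib Require Import Arith Lia FunctionalExtensionality.

Arguments Nat.leb : simpl nomatch.
Arguments Nat.eqb : simpl nomatch.
Ltac bdes := repeat (simpl in *; match goal with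
 | |- context [Nat.leb ?a ?b] => destruct (Nat.leb_spec a b)
 | |- context [Nat.eqb ?a ?b] => destruct (Nat.eqb_spec a b)
 | |- context [Nat.ltb ?a ?b] => destruct (Nat.ltb_spec a b)
 end).
Ltac vfin := bdes; try reflexivity; try lia; try (f_equal; lia).

Lemma tlift_tlift : forall t c d, c <= d -> tlift (S d) (tlift c t) = tlift c (tlift d t).
Proof.
  induction t; intros c d H; simpl.
  - vfin.
  - f_equal. apply IHt. lia.
  - f_equal; auto.
Qed.

Lemma tlift10 : forall t c, tlift (S c) (tlift 0 t) = tlift 0 (tlift c t).
Proof. intros; apply tlift_tlift; lia. Qed.

Lemma tsubst_tlift : forall t c u, tsubst c u (tlift c t) = t.
Proof.
  induction t; intros c u; simpl.
  - vfin.
  - f_equal; auto.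
  - f_equal; auto.
Qed.

Lemma tlift_tsubst_le : forall t c d u, c <= d ->
  tlift c (tsubst d u t) = tsubst (S d) (tlift c u) (tlift c t).
Proof.
  induction t; intros c d u H; simpl.
  - vfin.
  - f_equal. rewrite IHt by lia. f_equal. apply tlift_tlift. lia.
  - f_equal; auto.
Qed.

Lemma tlift_tsubst_ge : forall t c d u, d <= c ->
  tlift c (tsubst d u t) = tsubst d (tlift c u) (tlift (S c) t).
Proof.
  induction t; intros c d u H; simpl.
  - vfin.
  - f_equal. rewrite IHt by lia. f_equal. apply tlift10.
  - f_equal; auto.
Qed.

Lemma tsubst0_tlift : forall t c u, tsubst (S c) (tlift 0 u) (tlift 0 t) = tlift 0 (tsubst c u t).
Proof. intros; symmetry; apply tlift_tsubst_le; lia. Qed.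

Lemma be_lift : forall t u, beta_eta t u -> forall c, beta_eta (tlift c t) (tlift c u).
Proof.
  induction 1; intros c; simpl.
  - rewrite tlift_tsubst_ge by lia. apply be_beta.
  - rewrite tlift10. apply be_eta.
  - apply be_refl.
  - apply be_sym; auto.
  - eapply be_trans; eauto.
  - apply be_Lam; auto.
  - apply be_App; auto.
Qed.

Lemma be_beta' : forall t u v, v = tsubst 0 u t -> beta_eta (tApp (tLam t) u) v.
Proof. intros; subst; apply be_beta. Qed.

Definition cons0 (a : lterm) (s : nat -> lterm) : nat -> lterm :=
  fun n => match n with 0 => a | S m => s m end.
Definition ls (s : nat -> lterm) : nat -> lterm := fun n => tlift 0 (s n).

Fixpoint gstar (V : term) (s k : nat -> lterm) {struct V} : lterm :=
  match V with
  | Var x => s x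
  | Lam M => tLam (tLam (gcps M (cons0 (tVar 1) (ls (ls s))) (ls (ls k)) (tVar 0)))
  | _ => tVar 0
  end
with gcps (M : term) (s k : nat -> lterm) (K : lterm) {struct M} : lterm :=
  match M with
  | Var x => tApp K (s x)
  | Lam B => tApp K (tLam (tLam (gcps B (cons0 (tVar 1) (ls (ls s))) (ls (ls k)) (tVar 0))))
  | App M1 M2 =>
      match is_value M1, is_value M2 with
      | true, true => tApp (tApp (gstar M1 s k) (gstar M2 s k)) K
      | true, false =>
          gcps M2 s k (tLam (tApp (tApp (tlift 0 (gstar M1 s k)) (tVar 0)) (tlift 0 K)))
      | false, true =>
          gcps M1 s k (tLam (tApp (tApp (tVar 0) (tlift 0 (gstar M2 s k))) (tlift 0 K)))
      | false, false =>
          gcps M1 s k (tLam (gcps M2 (ls s) (ls k)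
                      (tLam (tApp (tApp (tVar 1) (tVar 0)) (tlift 0 (tlift 0 K))))))
      end
  | Where L N => gcps N s k (tLam (gcps L (cons0 (tVar 0) (ls s)) (ls k) (tlift 0 K)))
  | Mu J => tApp (tLam (gcpsJ J (ls s) (cons0 (tVar 0) (ls k)))) K
  end
with gcpsJ (J : jump) (s k : nat -> lterm) {struct J} : lterm :=
  match J with
  | Jmp c M => gcps M s k (k c)
  | JWhere J N => gcps N s k (tLam (gcpsJ J (cons0 (tVar 0) (ls s)) (ls k)))
  end.

Scheme term_mind := Induction for term Sort Prop
  with jump_mind := Induction for jump Sort Prop.
Combined Scheme tj_mind from term_mind, jump_mind.

Lemma gcps_val : forall V s k K, is_value V = true -> gcps V s k K = tApp K (gstar V s k).
Proof. destruct V; simpl; intros; try discriminate; reflexivity. Qed.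

Lemma bridge :
  (forall M, forall s k K, cps M s k K = gcps M (fun n => tVar (s n)) (fun n => tVar (k n)) K
     /\ star M s k = gstar M (fun n => tVar (s n)) (fun n => tVar (k n))) /\
  (forall J, forall s k, cpsJ J s k = gcpsJ J (fun n => tVar (s n)) (fun n => tVar (k n))).
Proof.
  apply tj_mind; intros; simpl.
  - split; reflexivity.
  - assert (E1 : (fun n => tVar (match n with 0 => 1 | S m => S (S (s m)) end))
                 = cons0 (tVar 1) (ls (ls (fun n => tVar (s n))))).
    { extensionality n; destruct n; reflexivity. }
    rewrite (proj1 (H _ _ _)), E1. split; reflexivity.
  - split; [|reflexivity].
    destruct (H s k (tVar 0)) as [_ S1]. destruct (H0 s k (tVar 0)) as [_ S2].
    rewrite S1, S2.
    destruct (is_value t), (is_value t0); rewrite ?(proj1 (H _ _ _)), ?(proj1 (H0 _ _ _)); reflexivity.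
  - split; [|reflexivity].
    assert (E1 : (fun n => tVar (consmap s n)) = cons0 (tVar 0) (ls (fun n => tVar (s n)))).
    { extensionality n; destruct n; reflexivity. }
    rewrite (proj1 (H _ _ _)), (proj1 (H0 _ _ _)), E1. reflexivity.
  - split; [|reflexivity].
    assert (E1 : (fun n => tVar (consmap k n)) = cons0 (tVar 0) (ls (fun n => tVar (k n)))).
    { extensionality n; destruct n; reflexivity. }
    rewrite H, E1. reflexivity.
  - rewrite (proj1 (H _ _ _)). reflexivity.
  - assert (E1 : (fun n => tVar (consmap s n)) = cons0 (tVar 0) (ls (fun n => tVar (s n)))).
    { extensionality n; destruct n; reflexivity. }
    rewrite (proj1 (H0 _ _ _)), H, E1. reflexivity.
Qed.

Ltac mapeq := let n := fresh "n" in
  extensionality n; destruct n as [|n]; unfold cons0, ls; simpl;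
  repeat rewrite ?tlift10, ?tsubst0_tlift, ?tsubst_tlift; try reflexivity.

Ltac getstar H t x := 
  let G := fresh "G" in
  pose proof H as G; rewrite !gcps_val in G by assumption; simpl in G; injection G as G.

Lemma gcps_tlift :
  (forall M, forall s k K c, tlift c (gcps M s k K) =
     gcps M (fun n => tlift c (s n)) (fun n => tlift c (k n)) (tlift c K)) /\
  (forall J, forall s k c, tlift c (gcpsJ J s k) =
     gcpsJ J (fun n => tlift c (s n)) (fun n => tlift c (k n))).
Proof.
  apply tj_mind; intros; simpl.
  - reflexivity.
  - rewrite H. do 4 f_equal; mapeq.
  - destruct (is_value t) eqn:E1, (is_value t0) eqn:E2; simpl.
    + getstar (H s k (tVar 0) c) t x. getstar (H0 s k (tVar 0) c) t0 x. congruence.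
    + getstar (H s k (tVar 0) c) t x. rewrite H0. simpl. rewrite !tlift10, G. reflexivity.
    + getstar (H0 s k (tVar 0) c) t0 x. rewrite H. simpl. rewrite !tlift10, G. reflexivity.
    + rewrite H. simpl. rewrite H0. simpl. rewrite !tlift10. f_equal. f_equal. f_equal; mapeq.
  - rewrite H0. simpl. rewrite H. rewrite tlift10. f_equal. f_equal. f_equal; mapeq.
  - rewrite H. f_equal. f_equal. f_equal; mapeq.
  - rewrite H. reflexivity.
  - rewrite H0. simpl. rewrite H. f_equal. f_equal. f_equal; mapeq.
Qed.

Lemma gcps_tsubst :
  (forall M, forall s k K c u, tsubst c u (gcps M s k K) =
     gcps M (fun n => tsubst c u (s n)) (fun n => tsubst c u (k n)) (tsubst c u K)) /\
  (forall J, forall s k c u, tsubst c u (gcpsJ J s k) =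
     gcpsJ J (fun n => tsubst c u (s n)) (fun n => tsubst c u (k n))).
Proof.
  apply tj_mind; intros; simpl.
  - reflexivity.
  - rewrite H. do 4 f_equal; mapeq.
  - destruct (is_value t) eqn:E1, (is_value t0) eqn:E2; simpl.
    + getstar (H s k (tVar 0) c u) t x. getstar (H0 s k (tVar 0) c u) t0 x. congruence.
    + getstar (H s k (tVar 0) c u) t x. rewrite H0. simpl. rewrite !tsubst0_tlift, G. reflexivity.
    + getstar (H0 s k (tVar 0) c u) t0 x. rewrite H. simpl. rewrite !tsubst0_tlift, G. reflexivity.
    + rewrite H. simpl. rewrite H0. simpl. rewrite !tsubst0_tlift. f_equal. f_equal. f_equal; mapeq.
  - rewrite H0. simpl. rewrite H. rewrite tsubst0_tlift. f_equal. f_equal. f_equal; mapeq.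
  - rewrite H. f_equal. f_equal. f_equal; mapeq.
  - rewrite H. reflexivity.
  - rewrite H0. simpl. rewrite H. f_equal. f_equal. f_equal; mapeq.
Qed.

Lemma isv_liftO : forall M c, is_value (liftO c M) = is_value M.
Proof. destruct M; simpl; intros; try reflexivity. destruct (c <=? n); reflexivity. Qed.
Lemma isv_liftC : forall M c, is_value (liftC c M) = is_value M.
Proof. destruct M; reflexivity. Qed.
Lemma isv_substC : forall M d l, is_value (substC d l M) = is_value M.
Proof. destruct M; reflexivity. Qed.
Lemma isv_csub : forall M d N, is_value (csub d N M) = is_value M.
Proof. destruct M; reflexivity. Qed.
Lemma isv_substO : forall M d V, is_value V = true -> is_value (substO d V M) = is_value M.
Proof. destruct M; simpl; intros; try reflexivity.
  destruct (n =? d); auto. destruct (d <? n); auto. Qed.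

Ltac isv := rewrite ?isv_liftO, ?isv_liftC, ?isv_substC, ?isv_csub, ?isv_substO by assumption.

Ltac bspec := repeat match goal with
 | |- context [Nat.leb ?a ?b] => destruct (Nat.leb_spec a b); simpl
 | |- context [Nat.eqb ?a ?b] => destruct (Nat.eqb_spec a b); simpl
 | |- context [Nat.ltb ?a ?b] => destruct (Nat.ltb_spec a b); simpl
 end.
Ltac natfin := try subst; try reflexivity; try (exfalso; lia);
  repeat match goal with |- context [match ?n with 0 => _ | S _ => _ end] =>
      destruct n; simpl; try (exfalso; lia) end;
  try reflexivity; try (repeat f_equal; lia).

Ltac mapeq2 := let n := fresh "n" in
  extensionality n; destruct n as [|n]; unfold cons0, ls; simpl;
  repeat rewrite ?tlift10, ?tsubst0_tlift, ?tsubst_tlift;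
  bspec; natfin.

Ltac getstar2 H :=
  let G := fresh "G" in
  pose proof H as G; rewrite !gcps_val in G by (isv; assumption); simpl in G; injection G as G; rewrite ?G.

Ltac appcase H H0 t t0 s k :=
  isv;
  let E1 := fresh "E" in let E2 := fresh "E" in
    destruct (is_value t) eqn:E1, (is_value t0) eqn:E2; simpl;
    [ getstar2 (H s k (tVar 0)); getstar2 (H0 s k (tVar 0)); reflexivity
    | rewrite H0; getstar2 (H s k (tVar 0)); reflexivity
    | rewrite H; getstar2 (H0 s k (tVar 0)); reflexivity
    | rewrite H, H0; f_equal; f_equal ].

Lemma gcps_liftO :
  (forall M, forall c s k K, gcps (liftO c M) s k K =
     gcps M (fun n => if c <=? n then s (S n) else s n) k K) /\
  (forall J, forall c s k, gcpsJ (liftOJ c J) s k =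
     gcpsJ J (fun n => if c <=? n then s (S n) else s n) k).
Proof.
  apply tj_mind; intros; simpl.
  - destruct (c <=? n); reflexivity.
  - rewrite H. repeat f_equal; mapeq2.
  - appcase (H c) (H0 c) t t0 s k. f_equal; mapeq2.
  - rewrite H0, H. repeat f_equal; mapeq2.
  - rewrite H. repeat f_equal; mapeq2.
  - rewrite H. reflexivity.
  - rewrite H0, H. repeat f_equal; mapeq2.
Qed.

Lemma gcps_liftC :
  (forall M, forall c s k K, gcps (liftC c M) s k K =
     gcps M s (fun n => if c <=? n then k (S n) else k n) K) /\
  (forall J, forall c s k, gcpsJ (liftCJ c J) s k =
     gcpsJ J s (fun n => if c <=? n then k (S n) else k n)).
Proof.
  apply tj_mind; intros; simpl.
  - reflexivity.
  - rewrite H. repeat f_equal; mapeq2.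
  - appcase (H c) (H0 c) t t0 s k. f_equal; mapeq2.
  - rewrite H0, H. repeat f_equal; mapeq2.
  - rewrite H. repeat f_equal; mapeq2.
  - rewrite H. destruct (c <=? n); reflexivity.
  - rewrite H0, H. repeat f_equal; mapeq2.
Qed.

Lemma gcps_substC :
  (forall M, forall d l s k K, gcps (substC d l M) s k K =
     gcps M s (fun n => if n =? d then k l else if d <? n then k (pred n) else k n) K) /\
  (forall J, forall d l s k, gcpsJ (substCJ d l J) s k =
     gcpsJ J s (fun n => if n =? d then k l else if d <? n then k (pred n) else k n)).
Proof.
  apply tj_mind; intros; simpl.
  - reflexivity.
  - rewrite H. repeat f_equal; mapeq2.
  - appcase (H d l) (H0 d l) t t0 s k. f_equal; mapeq2.
  - rewrite H0, H. repeat f_equal; mapeq2.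
  - rewrite H. repeat f_equal; mapeq2.
  - rewrite H. destruct (n =? d); [reflexivity|]. destruct (d <? n); reflexivity.
  - rewrite H0, H. repeat f_equal; mapeq2.
Qed.

Lemma gstar_tlift : forall V s k c, is_value V = true ->
  tlift c (gstar V s k) = gstar V (fun n => tlift c (s n)) (fun n => tlift c (k n)).
Proof. intros. pose proof (proj1 gcps_tlift V s k (tVar 0) c) as G.
  rewrite !gcps_val in G by assumption. simpl in G. injection G as G. exact G. Qed.

Lemma gstar_liftO : forall V s k c, is_value V = true ->
  gstar (liftO c V) s k = gstar V (fun n => if c <=? n then s (S n) else s n) k.
Proof. intros. pose proof (proj1 gcps_liftO V c s k (tVar 0)) as G.
  rewrite !gcps_val in G by (isv; assumption). injection G as G. exact G. Qed.

Lemma gstar_liftC : forall V s k c, is_value V = true ->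
  gstar (liftC c V) s k = gstar V s (fun n => if c <=? n then k (S n) else k n).
Proof. intros. pose proof (proj1 gcps_liftC V c s k (tVar 0)) as G.
  rewrite !gcps_val in G by (isv; assumption). injection G as G. exact G. Qed.

Definition Cf (N : term) (s k : nat -> lterm) (dk : nat) : lterm :=
  tLam (gcps N (cons0 (tVar 0) (ls s)) (ls k) (tlift 0 (k dk))).

Ltac cfin := unfold Cf; rewrite ?(proj1 gcps_liftO), ?(proj1 gcps_liftC), ?(proj1 gcps_tlift);
  repeat rewrite tlift10; f_equal; f_equal; try mapeq2.

Lemma gcps_csub :
  (forall M, forall dk N s k K, gcps (csub dk N M) s k K =
     gcps M s (fun n => if n =? dk then Cf N s k dk else k n) K) /\
  (forall J, forall dk N s k, gcpsJ (csubJ dk N J) s k =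
     gcpsJ J s (fun n => if n =? dk then Cf N s k dk else k n)).
Proof.
  apply tj_mind; intros; simpl.
  - reflexivity.
  - rewrite H. repeat f_equal; mapeq2; cfin.
  - appcase (H dk N) (H0 dk N) t t0 s k. f_equal; mapeq2; cfin.
  - rewrite H0, H. repeat f_equal; mapeq2; cfin.
  - rewrite H. repeat f_equal; mapeq2; cfin.
  - destruct (Nat.eqb_spec n dk); simpl.
    + subst. rewrite H. reflexivity.
    + rewrite H. replace (n =? dk) with false by (symmetry; apply Nat.eqb_neq; auto). reflexivity.
  - rewrite H0, H. repeat f_equal; mapeq2; cfin.
Qed.

Ltac sfin := rewrite ?gstar_liftO, ?gstar_liftC by assumption;
  rewrite ?gstar_tlift by assumption; f_equal; try mapeq2.

Lemma gcps_substO :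
  (forall M, forall d V, is_value V = true -> forall s k K, gcps (substO d V M) s k K =
     gcps M (fun n => if n =? d then gstar V s k else if d <? n then s (pred n) else s n) k K) /\
  (forall J, forall d V, is_value V = true -> forall s k, gcpsJ (substOJ d V J) s k =
     gcpsJ J (fun n => if n =? d then gstar V s k else if d <? n then s (pred n) else s n) k).
Proof.
  apply tj_mind; intros; simpl.
  - destruct (n =? d); [apply gcps_val; auto|]. destruct (d <? n); reflexivity.
  - rewrite H by (isv; auto). repeat f_equal; mapeq2; sfin.
  - assert (HV: is_value V = true) by assumption.
    appcase (H d V HV) (H0 d V HV) t t0 s k. f_equal; mapeq2; sfin.
  - rewrite H0, H by (isv; auto). repeat f_equal; mapeq2; sfin.
  - rewrite H by (isv; auto). repeat f_equal; mapeq2; sfin.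
  - rewrite H by auto. reflexivity.
  - rewrite H0, H by (isv; auto). repeat f_equal; mapeq2; sfin.
Qed.

Lemma Kcong : forall M s k K K', beta_eta K K' -> beta_eta (gcps M s k K) (gcps M s k K').
Proof.
  induction M; intros s k K K' HK; simpl.
  - apply be_App; auto using be_refl.
  - apply be_App; auto using be_refl.
  - destruct (is_value M1), (is_value M2).
    + apply be_App; auto using be_refl.
    + apply IHM2. apply be_Lam. apply be_App; auto using be_refl, be_lift.
    + apply IHM1. apply be_Lam. apply be_App; auto using be_refl, be_lift.
    + apply IHM1. apply be_Lam. apply IHM2. apply be_Lam.
      apply be_App; auto using be_refl, be_lift.
  - apply IHM2. apply be_Lam. apply IHM1. apply be_lift. auto.
  - apply be_App; auto using be_refl.
Qed.

Definition Uapp M1 M2 s k K :=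
  gcps M1 s k (tLam (gcps M2 (ls s) (ls k)
     (tLam (tApp (tApp (tVar 1) (tVar 0)) (tlift 0 (tlift 0 K)))))).

Lemma uniform : forall M1 M2 s k K, beta_eta (gcps (App M1 M2) s k K) (Uapp M1 M2 s k K).
Proof.
  intros. unfold Uapp. simpl.
  destruct (is_value M1) eqn:E1.
  - rewrite (gcps_val M1) by auto. apply be_sym. eapply be_trans. apply be_beta.
    rewrite (proj1 gcps_tsubst). simpl.
    rewrite tsubst0_tlift, !tsubst_tlift.
    assert (Hs : (fun n => tsubst 0 (gstar M1 s k) (ls s n)) = s).
    { extensionality n. unfold ls. apply tsubst_tlift. }
    assert (Hk : (fun n => tsubst 0 (gstar M1 s k) (ls k n)) = k).
    { extensionality n. unfold ls. apply tsubst_tlift. }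
    rewrite Hs, Hk.
    destruct (is_value M2) eqn:E2.
    + rewrite gcps_val by auto. eapply be_trans. apply be_beta. simpl.
      rewrite !tsubst_tlift. apply be_refl.
    + apply be_refl.
  - destruct (is_value M2) eqn:E2.
    + apply Kcong. apply be_Lam. rewrite gcps_val by auto.
      apply be_sym. eapply be_trans. apply be_beta. simpl.
      rewrite tsubst_tlift. unfold ls. rewrite gstar_tlift by auto. apply be_refl.
    + apply be_refl.
Qed.

Scheme ccv_mind := Induction for ccv_eq Sort Prop
  with ccvJ_mind := Induction for ccv_eqJ Sort Prop.
Combined Scheme ccv_comb from ccv_mind, ccvJ_mind.

Ltac eqfin := match goal with |- beta_eta ?a ?b => replace b with a; [apply be_refl|] end;
  repeat (rewrite ?gstar_liftO, ?gstar_liftC by auto;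
   rewrite ?(proj1 gcps_liftO), ?(proj1 gcps_liftC), ?(proj1 gcps_tlift), ?(proj1 gcps_tsubst),
   ?(proj2 gcps_liftO), ?(proj2 gcps_liftC), ?(proj2 gcps_tlift), ?(proj2 gcps_tsubst),
   ?(proj2 gcps_substC); simpl);
  repeat rewrite ?tlift10, ?tsubst0_tlift, ?tsubst_tlift;
  repeat f_equal; try mapeq2;
  try (rewrite ?gstar_tlift by auto; repeat f_equal; mapeq2).

Lemma main :
  (forall L M, ccv_eq L M -> forall s k K, beta_eta (gcps L s k K) (gcps M s k K)) /\
  (forall J J', ccv_eqJ J J' -> forall s k, beta_eta (gcpsJ J s k) (gcpsJ J' s k)).
Proof.
  apply ccv_comb; intros; simpl.
  - rewrite e, isv_liftO. destruct (is_value M) eqn:E; simpl; eqfin.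
  - rewrite e, e0, isv_liftO, e. simpl. eqfin.
  - rewrite e. rewrite (gcps_val V) by auto.
    eapply be_trans. { apply be_App; [apply be_beta|apply be_refl]. }
    simpl. eapply be_trans; [apply be_beta|]. apply be_sym.
    eapply be_trans; [apply be_beta|]. eqfin.
  - rewrite (gcps_val V) by auto. eapply be_trans; [apply be_beta|].
    rewrite (proj1 gcps_substO) by auto. eqfin.
  - eapply be_trans; [apply be_beta|]. apply be_sym; eapply be_trans; [apply be_beta|].
    rewrite (proj2 gcps_csub). eqfin. all: rewrite (proj1 gcps_liftC), (proj1 gcps_tsubst); simpl; repeat f_equal; try mapeq2.
  - rewrite isv_liftO, e. simpl. rewrite (gcps_val V) by auto. apply be_App; [apply be_refl|].
    rewrite gstar_liftO by auto.
    match goal with |- context [gstar V ?a ?b] => replace (gstar V a b) with (tlift 0 (tlift 0 (gstar V s k))) end.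
    + eapply be_trans; [apply be_Lam; apply (be_eta (tApp (tlift 0 (gstar V s k)) (tVar 0)))|]. apply be_eta.
    + rewrite !gstar_tlift by auto. f_equal; mapeq2.
  - apply Kcong, be_eta.
  - eapply be_trans; [apply be_beta|]. eqfin.
  - eqfin.
  - eapply be_trans. { apply Kcong, be_Lam, be_beta. }
    apply be_sym. eapply be_trans; [apply be_beta|]. eqfin.
  - apply be_refl.
  - apply be_sym; auto.
  - eapply be_trans; eauto.
  - apply be_App; [apply be_refl|]. apply be_Lam, be_Lam. auto.
  - eapply be_trans; [apply uniform|]. apply be_sym. eapply be_trans; [apply uniform|].
    apply be_sym. unfold Uapp. eapply be_trans; [apply H|]. apply Kcong, be_Lam, H0.
  - eapply be_trans; [apply H0|]. apply Kcong, be_Lam, H.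
  - apply be_App; [apply be_Lam, H|apply be_refl].
  - eapply be_trans; [apply be_beta|]. eqfin.
  - eqfin.
  - apply be_refl.
  - apply be_refl.
  - apply be_sym; auto.
  - eapply be_trans; eauto.
  - apply H.
  - eapply be_trans; [apply H0|]. apply Kcong, be_Lam, H.
Qed.

Theorem proposition1p15 : forall L M : term,
  ccv_eq L M -> beta_eta (cps_top L) (cps_top M).
Proof.
  intros L M H. unfold cps_top. apply be_Lam.
  rewrite !(fun M s k K => proj1 (proj1 bridge M s k K)).
  apply (proj1 main); auto.
Qed.
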